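(* Let $\mathbb F$ be a field of odd characteristic or of characteristic $0$, and let $\overline{\mathbb F}$ be an algebraically closed field containing $\mathbb F[i]$, where $i^2=-1$. Let $r_1,r_2\in\mathbb F$, and for $j=1,2$ let $C_j$ be the line complex in $\mathbb P^3(\overline{\mathbb F})$ defined by the hyperplane $\mathcal H_j=\{\boldsymbol N_j\cdot\boldsymbol P=0\}$, where $$\boldsymbol N_j=[2r_j:-1:0:0:1:0].$$ Let $S$ be a doubly-ruled quadric surface in $\mathbb P^3(\overline{\mathbb F})$, and suppose one of its rulings contains three distinct lines of $C_1$. Then the complementary ruling of $S$ contains at most two lines of $C_2$. The same holds with the roles of $C_1$ and $C_2$ interchanged.
   Context: Plücker coordinates: a line through two distinct points $(x_0:\dots:x_3)$ and $(y_0:\dots:y_3)$ of $\mathbb P^3$ has Plücker vector $$\boldsymbol P=[P_{01}:P_{02}:P_{03}:P_{23}:P_{31}:P_{12}]=[\boldsymbol\omega:\boldsymbol v],\qquad P_{ij}=x_iy_j-x_jy_i.$$ The Klein quadric is $\mathcal K=\{\boldsymbol\omega\cdot\boldsymbol v=0\}$. The line complex $C_j$ is the set of lines whose Plücker vectors lie in $\mathcal K\cap\mathcal H_j$. It is regular because $\boldsymbol N_j\notin\mathcal K$. Its lines include, for each $(x,y,z)$, the line with Plücker vector $$[1:r_j-z:x-iy:r_j^2-x^2-y^2-z^2:-(z+r_j):x+iy].$$ The rulings of a doubly-ruled quadric are reguli: sets of lines whose Plücker vectors form the transverse intersection of $\mathcal K$ with a two-plane in $\mathbb P^5$. *)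

(* Defs.v *)
From HB Require Import structures.
From mathcomp Require Import all_boot all_order all_algebra all_field.
Set Implicit Arguments. Unset Strict Implicit. Unset Printing Implicit Defensive.
Import Order.TTheory GRing.Theory Num.Theory.
Local Open Scope ring_scope.

(* Points of P^3(K): nonzero row vectors 'rV[K]_4 (up to scaling).
   Lines of P^3(K): 2x4 matrices of rank 2; the line is the (projectivised)
   row space, two matrices L, M denote the same line iff (L == M)%MS. *)

Definition is_line (K : fieldType) (L : 'M[K]_(2,4)) : Prop := \rank L = 2%N.

Definition point_on_line (K : fieldType) (x : 'rV[K]_4) (L : 'M[K]_(2,4)) : Prop :=
  x != 0 /\ (x <= L)%MS.

Definition same_line (K : fieldType) (L M : 'M[K]_(2,4)) : Prop := (L == M)%MS.

Definition pl (K : fieldType) (L : 'M[K]_(2,4)) (i j : nat) : K :=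
  L 0 (inord i) * L 1 (inord j) - L 0 (inord j) * L 1 (inord i).

Definition plucker (K : fieldType) (L : 'M[K]_(2,4)) : 'rV[K]_6 :=
  \row_(k < 6) nth 0 [:: pl L 0 1; pl L 0 2; pl L 0 3;
                          pl L 2 3; pl L 3 1; pl L 1 2] k.

Definition Nvec (K : fieldType) (r : K) : 'rV[K]_6 :=
  \row_(k < 6) nth 0 [:: 2 * r; -1; 0; 0; 1; 0] k.

Definition dot6 (K : fieldType) (u v : 'rV[K]_6) : K := \sum_(k < 6) u 0 k * v 0 k.

Definition in_complex (K : fieldType) (r : K) (L : 'M[K]_(2,4)) : Prop :=
  is_line L /\ dot6 (Nvec r) (plucker L) = 0.

(* A quadric surface in P^3(K): zero set of the quadratic form x Q x^T with
   Q a nonzero symmetric 4x4 matrix. *)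
Definition quadric_surface (K : fieldType) (Q : 'M[K]_4) : Prop :=
  Q^T = Q /\ Q != 0.

Definition point_on_quadric (K : fieldType) (Q : 'M[K]_4) (x : 'rV[K]_4) : Prop :=
  x != 0 /\ (x *m Q *m x^T) 0 0 = 0.

Definition line_in_quadric (K : fieldType) (Q : 'M[K]_4) (L : 'M[K]_(2,4)) : Prop :=
  is_line L /\ forall x : 'rV[K]_4, (x <= L)%MS -> (x *m Q *m x^T) 0 0 = 0.

Definition ruling (K : fieldType) (Q : 'M[K]_4) (R : 'M[K]_(2,4) -> Prop) : Prop :=
  [/\ forall L, R L -> line_in_quadric Q L,
      forall x, point_on_quadric Q x -> exists L, R L /\ point_on_line x L
    & forall x L M, R L -> R M -> point_on_line x L -> point_on_line x M ->
        same_line L M].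

Definition complementary (K : fieldType) (R1 R2 : 'M[K]_(2,4) -> Prop) : Prop :=
  forall L M, R1 L -> R2 M -> ~ same_line L M.

Definition doubly_ruled (K : fieldType) (Q : 'M[K]_4) : Prop :=
  quadric_surface Q /\
  exists R1 R2, [/\ ruling Q R1, ruling Q R2 & complementary R1 R2].

Definition three_lines_of (K : fieldType) (R : 'M[K]_(2,4) -> Prop) (r : K) : Prop :=
  exists L1 L2 L3, [/\ R L1 /\ in_complex r L1, R L2 /\ in_complex r L2,
                       R L3 /\ in_complex r L3 &
                       [/\ ~ same_line L1 L2, ~ same_line L1 L3 & ~ same_line L2 L3]].

Definition at_most_two_lines_of (K : fieldType) (R : 'M[K]_(2,4) -> Prop) (r : K) : Prop :=
  forall L1 L2 L3, R L1 -> in_complex r L1 -> R L2 -> in_complex r L2 ->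
    R L3 -> in_complex r L3 ->
    [\/ same_line L1 L2, same_line L1 L3 | same_line L2 L3].

(* Main.v *)
Require Import Defs.
From HB Require Import structures.
From mathcomp Require Import all_boot all_order all_algebra all_field.
From mathcomp Require Import ring.
Import GRing.Theory.
Local Open Scope ring_scope.
Set Implicit Arguments. Unset Strict Implicit. Unset Printing Implicit Defensive.

Definition mxf (R : comNzRingType) n (f : nat -> nat -> R) : 'M[R]_n :=
  \matrix_(i < n, j < n) f i j.
Arguments mxf {R} n f : simpl never.

Lemma det_expand (R : comNzRingType) n (f : nat -> nat -> R) :
  \det (mxf n.+1 f) =
  \sum_(j < n.+1) f 0%N j * (-1) ^+ j * \det (mxf n (fun i k => f i.+1 (bump j k))).
Proof.
rewrite (expand_det_row _ ord0); apply: eq_bigr => j _.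
rewrite mxE /cofactor add0n -mulrA; congr (_ * (_ * _)).
by congr (\det _); apply/matrixP => i k; rewrite !mxE.
Qed.

Lemma det4 (R : comNzRingType) (f : nat -> nat -> R) : \det (mxf 4 f) =
  f 0 0 * (f 1 1 * (f 2 2 * f 3 3 - f 2 3 * f 3 2) - f 1 2 * (f 2 1 * f 3 3 - f 2 3 * f 3 1) + f 1 3 * (f 2 1 * f 3 2 - f 2 2 * f 3 1))
 - f 0 1 * (f 1 0 * (f 2 2 * f 3 3 - f 2 3 * f 3 2) - f 1 2 * (f 2 0 * f 3 3 - f 2 3 * f 3 0) + f 1 3 * (f 2 0 * f 3 2 - f 2 2 * f 3 0))
 + f 0 2 * (f 1 0 * (f 2 1 * f 3 3 - f 2 3 * f 3 1) - f 1 1 * (f 2 0 * f 3 3 - f 2 3 * f 3 0) + f 1 3 * (f 2 0 * f 3 1 - f 2 1 * f 3 0))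
 - f 0 3 * (f 1 0 * (f 2 1 * f 3 2 - f 2 2 * f 3 1) - f 1 1 * (f 2 0 * f 3 2 - f 2 2 * f 3 0) + f 1 2 * (f 2 0 * f 3 1 - f 2 1 * f 3 0)).
Proof.
rewrite !det_expand !big_ord_recl !big_ord0 /=.
rewrite !det_expand !big_ord_recl !big_ord0 /=.
rewrite !det_expand !big_ord_recl !big_ord0 /=.
rewrite !det_expand !big_ord_recl !big_ord0 /= !det_mx00.
rewrite /bump /=.
ring.
Qed.

Definition c6 (K : fieldType) (u : 'rV[K]_6) (k : nat) := u 0 (inord k).
Definition kf (K : fieldType) (u w : 'rV[K]_6) : K :=
  c6 u 0 * c6 w 3 + c6 u 1 * c6 w 4 + c6 u 2 * c6 w 5 +
  c6 u 3 * c6 w 0 + c6 u 4 * c6 w 1 + c6 u 5 * c6 w 2.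

Definition gLM (K : fieldType) (L M : 'M[K]_(2,4)) (i j : nat) : K :=
  if (i < 2)%N then L (inord i) (inord j) else M (inord (i - 2)) (inord j).

Lemma colLM (K : fieldType) (L M : 'M[K]_(2,4)) : (col_mx L M : 'M_4) = mxf 4 (gLM L M).
Proof.
apply/matrixP => i j; rewrite /mxf [RHS]mxE /gLM.
case: (@splitP 2 2 i) => k hk.
  have -> : i = lshift 2 k by apply/val_inj.
  by rewrite /= !inord_val; exact: (col_mxEu L M k j).
have e : inord (i - 2) = k :> 'I_2 by apply/val_inj; rewrite /= hk addKn inordK.
rewrite e inord_val; have -> : i = rshift 2 k by apply/val_inj.
exact: (col_mxEd L M k j).
Qed.

Lemma o20 : (0 : 'I_2) = inord 0. Proof. by apply/val_inj; rewrite /= inordK. Qed.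
Lemma o21 : (1 : 'I_2) = inord 1. Proof. by apply/val_inj; rewrite /= inordK. Qed.

Lemma plE (K : fieldType) (L : 'M[K]_(2,4)) k : (k < 6)%N -> c6 (plucker L) k =
  nth 0 [:: pl L 0 1; pl L 0 2; pl L 0 3; pl L 2 3; pl L 3 1; pl L 1 2] k.
Proof. by move=> hk; rewrite /c6 /plucker mxE inordK. Qed.

Lemma kf_det (K : fieldType) (L M : 'M[K]_(2,4)) :
  kf (plucker L) (plucker M) = \det (col_mx L M : 'M_4).
Proof.
rewrite colLM det4 /kf !plE // /= /gLM /= /pl o20 o21.
ring.
Qed.

Lemma kf_klein (K : fieldType) (L : 'M[K]_(2,4)) : kf (plucker L) (plucker L) = 0.
Proof. rewrite /kf !plE // /= /pl. ring. Qed.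

Definition Nvp (K : fieldType) (r : K) : 'rV[K]_6 :=
  \row_(k < 6) nth 0 [:: 0; 1; 0; 2 * r; -1; 0] k.

Lemma NvpE (K : fieldType) (r : K) k : (k < 6)%N -> c6 (Nvp r) k = nth 0 [:: 0; 1; 0; 2 * r; -1; 0] k.
Proof. by move=> hk; rewrite /c6 /Nvp mxE inordK. Qed.

Lemma dot6_kf (K : fieldType) (r : K) (L : 'M[K]_(2,4)) :
  dot6 (Nvec r) (plucker L) = kf (Nvp r) (plucker L).
Proof.
rewrite /dot6 !big_ord_recl big_ord0 /kf !plE // !NvpE // /Nvec /plucker !mxE /=.
ring.
Qed.

Lemma kf_NN (K : fieldType) (a b : K) : kf (Nvp a) (Nvp b) = - 2.
Proof. rewrite /kf !NvpE //=. ring. Qed.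

Lemma kfC (K : fieldType) (u w : 'rV[K]_6) : kf u w = kf w u.
Proof. rewrite /kf. ring. Qed.

Lemma kfDl (K : fieldType) (u u' w : 'rV[K]_6) : kf (u + u') w = kf u w + kf u' w.
Proof. rewrite /kf /c6 !mxE. ring. Qed.

Lemma kfZl (K : fieldType) (a : K) (u w : 'rV[K]_6) : kf (a *: u) w = a * kf u w.
Proof. rewrite /kf /c6 !mxE. ring. Qed.

Lemma kf0l (K : fieldType) (w : 'rV[K]_6) : kf 0 w = 0.
Proof. rewrite /kf /c6 !mxE. ring. Qed.


Lemma gram3 (K : fieldType) (a b c w1 w2 w3 : K) : (2:K) != 0 -> a != 0 -> b != 0 -> c != 0 ->
  w2 * a + w3 * b = 0 -> w1 * a + w3 * c = 0 -> w1 * b + w2 * c = 0 ->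
  [/\ w1 = 0, w2 = 0 & w3 = 0].
Proof.
move=> h2 ha hb hc e1 e2 e3.
have h : 2 * b * c * w3 = b * (w1 * a + w3 * c) + c * (w2 * a + w3 * b) - a * (w1 * b + w2 * c) by ring.
rewrite e1 e2 e3 !mulr0 addr0 subrr in h.
have w30 : w3 = 0.
  by move/eqP: h; rewrite !mulf_eq0 (negbTE h2) (negbTE hb) (negbTE hc) /= => /eqP.
rewrite w30 !mul0r !addr0 in e1 e2.
move/eqP: e1; rewrite mulf_eq0 (negbTE ha) orbF => /eqP w20.
move/eqP: e2; rewrite mulf_eq0 (negbTE ha) orbF => /eqP w10.
by [].
Qed.

Lemma w0c6 (K : fieldType) (w : 'rV[K]_6) (i : 'I_6) : w 0 i = c6 w i.
Proof. by rewrite /c6 inord_val. Qed.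

Definition V6 (K : fieldType) (p1 p2 p3 q1 q2 q3 : 'rV[K]_6) : 'M[K]_6 :=
  \matrix_(i < 6, j < 6) (nth 0 [:: p1; p2; p3; q1; q2; q3] i) 0 j.

Lemma kfV (K : fieldType) (p1 p2 p3 q1 q2 q3 w u : 'rV[K]_6) :
  kf (w *m V6 p1 p2 p3 q1 q2 q3) u =
  c6 w 0 * kf p1 u + c6 w 1 * kf p2 u + c6 w 2 * kf p3 u +
  c6 w 3 * kf q1 u + c6 w 4 * kf q2 u + c6 w 5 * kf q3 u.
Proof.
have rowV : forall i : 'I_6, row i (V6 p1 p2 p3 q1 q2 q3) = nth 0 [:: p1; p2; p3; q1; q2; q3] i.
  by move=> i; apply/rowP => j; rewrite !mxE.
rewrite mulmx_sum_row !big_ord_recl big_ord0 !rowV !kfDl !kfZl kf0l !w0c6 /=.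
ring.
Qed.

Lemma linA (K : fieldType) (p1 p2 p3 q1 q2 q3 n n' : 'rV[K]_6) : (2:K) != 0 ->
  kf p1 p1 = 0 -> kf p2 p2 = 0 -> kf p3 p3 = 0 ->
  kf q1 q1 = 0 -> kf q2 q2 = 0 -> kf q3 q3 = 0 ->
  kf p1 p2 != 0 -> kf p1 p3 != 0 -> kf p2 p3 != 0 ->
  kf q1 q2 != 0 -> kf q1 q3 != 0 -> kf q2 q3 != 0 ->
  (forall p q, p \in [:: p1; p2; p3] -> q \in [:: q1; q2; q3] -> kf p q = 0) ->
  kf n p1 = 0 -> kf n p2 = 0 -> kf n p3 = 0 ->
  kf q1 n' = 0 -> kf q2 n' = 0 -> kf q3 n' = 0 ->
  kf n n' != 0 -> False.
Proof.
move=> h2 e11 e22 e33 f11 f22 f33 g12 g13 g23 k12 k13 k23 hpq hn1 hn2 hn3 hm1 hm2 hm3 hnn.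
have pq : forall i j, i \in [:: p1; p2; p3] -> j \in [:: q1; q2; q3] -> kf i j = 0 /\ kf j i = 0.
  by move=> i j hi hj; rewrite (kfC j i); split; apply: hpq.
have in1 : p1 \in [:: p1; p2; p3] by rewrite !inE eqxx.
have in2 : p2 \in [:: p1; p2; p3] by rewrite !inE eqxx orbT.
have in3 : p3 \in [:: p1; p2; p3] by rewrite !inE eqxx !orbT.
have jn1 : q1 \in [:: q1; q2; q3] by rewrite !inE eqxx.
have jn2 : q2 \in [:: q1; q2; q3] by rewrite !inE eqxx orbT.
have jn3 : q3 \in [:: q1; q2; q3] by rewrite !inE eqxx !orbT.
have [a11 b11] := pq _ _ in1 jn1. have [a12 b12] := pq _ _ in1 jn2. have [a13 b13] := pq _ _ in1 jn3.
have [a21 b21] := pq _ _ in2 jn1. have [a22 b22] := pq _ _ in2 jn2. have [a23 b23] := pq _ _ in2 jn3.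
have [a31 b31] := pq _ _ in3 jn1. have [a32 b32] := pq _ _ in3 jn2. have [a33 b33] := pq _ _ in3 jn3.
set V := V6 p1 p2 p3 q1 q2 q3.
have inj : forall w : 'rV_6, w *m V = 0 -> w = 0.
  move=> w hw.
  have E : forall u, kf (w *m V) u = 0 by move=> u; rewrite hw kf0l.
  have Ep1 := E p1; have Ep2 := E p2; have Ep3 := E p3.
  have Eq1 := E q1; have Eq2 := E q2; have Eq3 := E q3.
  rewrite !kfV in Ep1 Ep2 Ep3 Eq1 Eq2 Eq3.
  rewrite e11 e22 e33 f11 f22 f33 b11 b12 b13 b21 b22 b23 b31 b32 b33
     a11 a12 a13 a21 a22 a23 a31 a32 a33 in Ep1 Ep2 Ep3 Eq1 Eq2 Eq3.
  rewrite !(kfC p2 p1) !(kfC p3 p1) !(kfC p3 p2) !(kfC q2 q1) !(kfC q3 q1) !(kfC q3 q2)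
    in Ep1 Ep2 Ep3 Eq1 Eq2 Eq3.
  have [w0 w1 w2] : [/\ c6 w 0 = 0, c6 w 1 = 0 & c6 w 2 = 0].
    apply: (gram3 h2 g12 g13 g23).
    - by rewrite -Ep1; ring.
    - by rewrite -Ep2; ring.
    - by rewrite -Ep3; ring.
  have [w3 w4 w5] : [/\ c6 w 3 = 0, c6 w 4 = 0 & c6 w 5 = 0].
    apply: (gram3 h2 k12 k13 k23).
    - by rewrite -Eq1; ring.
    - by rewrite -Eq2; ring.
    - by rewrite -Eq3; ring.
  apply/rowP => i; rewrite w0c6 mxE.
  case: i => [[|[|[|[|[|[|i]]]]]] hi] //=.
have detV : \det V != 0.
  apply/negP => /det0P [w wn0 hw].
  by move/eqP: wn0; apply; apply: inj.
have uV : V \in unitmx by rewrite unitmxE unitfE.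
set c := n *m invmx V.
have nE : n = c *m V by rewrite /c mulmxKV.
have En1 := hn1; have En2 := hn2; have En3 := hn3.
rewrite nE !kfV in En1 En2 En3.
rewrite e11 e22 e33 b11 b12 b13 b21 b22 b23 b31 b32 b33 in En1 En2 En3.
rewrite !(kfC p2 p1) !(kfC p3 p1) !(kfC p3 p2) in En1 En2 En3.
have [c0 c1 c2] : [/\ c6 c 0 = 0, c6 c 1 = 0 & c6 c 2 = 0].
  apply: (gram3 h2 g12 g13 g23).
  - by rewrite -En1; ring.
  - by rewrite -En2; ring.
  - by rewrite -En3; ring.
move: hnn; rewrite nE kfV c0 c1 c2 hm1 hm2 hm3.
by rewrite !mulr0 !mul0r !addr0 eqxx.
Qed.


Definition meet (K : fieldType) (L M : 'M[K]_(2,4)) :=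
  exists x : 'rV_4, [/\ x != 0, (x <= L)%MS & (x <= M)%MS].

Lemma meet_det (K : fieldType) (L M : 'M[K]_(2,4)) : is_line L -> is_line M ->
  meet L M <-> \det (col_mx L M : 'M_4) = 0.
Proof.
move=> hL hM; have fL : row_free L by rewrite /row_free hL.
have fM : row_free M by rewrite /row_free hM.
split.
  case=> x [xn0 xL xM]; case/submxP: xL => a xa; case/submxP: xM => b xb.
  apply/eqP/det0P; exists (row_mx a (- b)).
    have h : row_mx a (- b) != 0 :> 'rV_(2+2).
      rewrite row_mx_eq0 negb_and; apply/orP; left; apply: contra xn0 => /eqP a0.
      by rewrite xa a0 mul0mx.
    exact: h.
  have h : row_mx a (- b) *m (col_mx L M : 'M_(2+2,4)) = 0 by rewrite mul_row_col mulNmx -xa -xb subrr.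
  exact: h.
move/eqP/det0P => [v vn0 hv].
have vE : v = row_mx (lsubmx (v : 'rV_(2+2))) (rsubmx (v : 'rV_(2+2))) by rewrite hsubmxK.
set a := lsubmx _ in vE; set b := rsubmx _ in vE.
have {}hv : a *m L + b *m M = 0 by rewrite -mul_row_col -vE; exact: hv.
exists (a *m L); split.
- apply: contra vn0 => /eqP aL0.
  have a0 : a = 0 by apply: (row_free_inj fL); rewrite mul0mx.
  have bM0 : b *m M = 0 by rewrite -hv aL0 add0r.
  have b0 : b = 0 by apply: (row_free_inj fM); rewrite mul0mx.
  by rewrite vE a0 b0 row_mx0.
- exact: submxMl.
- have -> : a *m L = (- b) *m M by rewrite mulNmx; apply/eqP; rewrite -addr_eq0 hv.
  exact: submxMl.
Qed.

Lemma G1 (K : fieldType) (Q : 'M[K]_4) R L M : ruling Q R -> R L -> R M -> meet L M -> same_line L M.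
Proof.
case=> _ _ h3 hL hM [x [xn0 xL xM]].
exact: (h3 x L M hL hM (conj xn0 xL) (conj xn0 xM)).
Qed.

Definition qb (K : fieldType) (Q : 'M[K]_4) (x y : 'rV[K]_4) : K := (x *m Q *m y^T) 0 0.

Lemma qbDl (K : fieldType) (Q : 'M[K]_4) x y z : qb Q (x + y) z = qb Q x z + qb Q y z.
Proof. by rewrite /qb !mulmxDl mxE. Qed.
Lemma qbZl (K : fieldType) (Q : 'M[K]_4) a x z : qb Q (a *: x) z = a * qb Q x z.
Proof. by rewrite /qb -!scalemxAl mxE. Qed.
Lemma qbC (K : fieldType) (Q : 'M[K]_4) x y : Q^T = Q -> qb Q x y = qb Q y x.
Proof.
move=> hQ; rewrite /qb.
have -> : x *m Q *m y^T = (y *m Q *m x^T)^T by rewrite !trmx_mul trmxK hQ mulmxA.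
by rewrite mxE.
Qed.
Lemma qbDr (K : fieldType) (Q : 'M[K]_4) x y z : Q^T = Q -> qb Q z (x + y) = qb Q z x + qb Q z y.
Proof. by move=> hQ; rewrite !(qbC z _ hQ) qbDl. Qed.
Lemma qbZr (K : fieldType) (Q : 'M[K]_4) a x z : Q^T = Q -> qb Q z (a *: x) = a * qb Q z x.
Proof. by move=> hQ; rewrite !(qbC z _ hQ) qbZl. Qed.

Lemma double0 (K : fieldType) (a : K) : (2:K) != 0 -> a + a = 0 -> a = 0.
Proof.
move=> h2 h; have : 2 * a = 0 by rewrite -h; ring.
by move/eqP; rewrite mulf_eq0 (negbTE h2) => /eqP.
Qed.

Lemma polar (K : fieldType) (Q : 'M[K]_4) m (V : 'M[K]_(m,4)) : Q^T = Q -> (2:K) != 0 ->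
  (forall z, (z <= V)%MS -> qb Q z z = 0) ->
  forall x y, (x <= V)%MS -> (y <= V)%MS -> qb Q x y = 0.
Proof.
move=> hQ h2 hz x y xV yV.
have h := hz (x + y) (addmx_sub xV yV).
rewrite qbDl !qbDr // (hz x xV) (hz y yV) (qbC y x hQ) add0r addr0 in h.
exact: double0 h2 h.
Qed.

Lemma keyU (K : fieldType) m p (P : 'M[K]_(m,4)) (z : 'rV_4) (U : 'M_(4,p)) :
  \rank P = 3 -> ~~ (z <= P)%MS -> P *m U = 0 -> z *m U = 0 -> U = 0.
Proof.
move=> hP zP PU zU.
set C := col_mx P z.
have sPC : (P <= C)%MS.
  have -> : P = row_mx 1%:M 0 *m C by rewrite mul_row_col mul1mx mul0mx addr0.
  exact: submxMl.
have nCP : ~~ (C <= P)%MS by rewrite col_mx_sub submx_refl.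
have lt : (P < C)%MS by rewrite ltmxE sPC nCP.
move: lt; rewrite ltmxErank => /andP [_ lt].
have r4 : \rank C = 4.
  by apply/eqP; rewrite eqn_leq rank_leq_col /=; rewrite hP in lt.
have : row_full C by rewrite /row_full r4.
case/row_fullP => B hB.
by rewrite -[U]mul1mx -hB -mulmxA mul_col_mx PU zU col_mx0 mulmx0.
Qed.

Lemma nz_row (K : fieldType) m n (A : 'M[K]_(m,n)) : A != 0 -> exists i, row i A != 0.
Proof.
move=> hA; case: (pickP (fun i => row i A != 0)) => [i hi|h]; first by exists i.
exfalso; move/eqP: hA; apply; apply/row_matrixP => i; rewrite row0.
by move: (h i) => /= /negbFE /eqP.
Qed.

Lemma not_sub_row (K : fieldType) m m2 n (A : 'M[K]_(m,n)) (B : 'M_(m2,n)) :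
  (\rank B < \rank A)%N -> exists i, ~~ (row i A <= B)%MS.
Proof.
move=> lt; apply/row_subPn; apply/negP => sAB.
by have := mxrankS sAB; rewrite leqNgt lt.
Qed.

Lemma rowqb (K : fieldType) (Q : 'M[K]_4) m (X : 'M[K]_(m,4)) (y : 'rV[K]_4) (a : 'I_m) (b : 'I_1) :
  (X *m (Q *m y^T)) a b = qb Q (row a X) y.
Proof.
rewrite /qb !mulmxA -!row_mul [RHS]mxE; congr (_ _ _); exact: ord1.
Qed.

Lemma twolines (K : fieldType) (Q : 'M[K]_4) R m (P : 'M[K]_(m,4)) L L' (y' : 'rV[K]_4) :
  ruling Q R -> \rank P = 3 -> R L -> R L' -> (L <= P)%MS -> (L' <= P)%MS ->
  y' != 0 -> (y' <= L')%MS -> ~~ (y' <= L)%MS -> False.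
Proof.
move=> hR hP RL RL' LP L'P yn0 yL' yL.
have [h1 _ _] := hR.
have lL := (h1 L RL).1; have lL' := (h1 L' RL').1.
have hd : \det (col_mx L L' : 'M_4) = 0.
  apply/eqP; apply: contraT => hd.
  have : row_free (col_mx L L' : 'M_4) by rewrite row_free_unit unitmxE unitfE.
  rewrite /row_free => /eqP r4.
  have := mxrankS (_ : (col_mx L L' <= P)%MS); rewrite col_mx_sub LP L'P => /(_ isT).
  by rewrite r4 hP.
have hm := (meet_det lL lL').2 hd.
have /andP [_ sL'L] := G1 hR RL RL' hm.
by move: yL; rewrite (submx_trans yL' sL'L).
Qed.


Lemma subsub (K : fieldType) m1 m2 (a b : 'M[K]_(m1,4)) (C : 'M_(m2,4)) :
  (a <= C)%MS -> (b <= C)%MS -> (a - b <= C)%MS.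
Proof. by move=> ha hb; rewrite -scaleN1r; apply: addmx_sub ha (scalemx_sub _ hb). Qed.

Lemma trQ (K : fieldType) (Q : 'M[K]_4) (y : 'rV[K]_4) : Q^T = Q -> Q *m y^T = 0 -> y *m Q = 0.
Proof.
move=> hQ h; have := congr1 trmx h; rewrite trmx_mul trmxK hQ trmx0 => ->.
by [].
Qed.

Lemma one1 (K : fieldType) (Q : 'M[K]_4) (z y : 'rV[K]_4) : qb Q z y = 0 -> z *m (Q *m y^T) = 0.
Proof. by move=> h; apply/matrixP => a b; rewrite !ord1 mulmxA [RHS]mxE. Qed.

Lemma noplane (K : fieldType) (Q : 'M[K]_4) R m (P : 'M[K]_(m,4)) : (2:K) != 0 -> Q^T = Q -> Q != 0 ->
  ruling Q R -> \rank P = 3 -> (forall z, (z <= P)%MS -> qb Q z z = 0) -> False.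
Proof.
move=> h2 hQ hQ0 hR hP hz.
have polP := polar hQ h2 hz.
have [h1 hcov _] := hR.
have PU : forall y : 'rV[K]_4, (y <= P)%MS -> P *m (Q *m y^T) = 0.
  move=> y yP; apply/matrixP => a b; rewrite rowqb [RHS]mxE.
  by apply: polP; [exact: row_sub | exact: yP].
have stepa : forall (y : 'rV[K]_4) L, (y <= P)%MS -> y *m Q != 0 -> R L -> (y <= L)%MS -> (L <= P)%MS.
  move=> y L yP yQ RL yL; apply/row_subP => i; apply: contraT => ziP.
  have hl := h1 L RL.
  have U0 : Q *m y^T = 0.
    apply: (keyU hP ziP); first exact: PU.
    apply: one1; apply: (polar hQ h2 hl.2); [exact: row_sub | exact: yL].
  by move: yQ; rewrite (trQ hQ U0) eqxx.
have Pn0 : P != 0 by rewrite -mxrank_eq0 hP.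
have [i yi0] := nz_row Pn0.
set y := row i P in yi0.
have yP : (y <= P)%MS by exact: row_sub.
have notin : forall L, R L -> exists j, ~~ (row j P <= L)%MS.
  move=> L RL; apply: not_sub_row; rewrite hP (h1 L RL).1 //.
case: (boolP (P *m Q == 0)) => hPQ.
  have allin : forall L, R L -> (L <= P)%MS.
    move=> L RL; apply/row_subP => k; set z := row k L; apply: contraT => zP.
    have hl := h1 L RL.
    have qz : qb Q z z = 0 by apply: hl.2; exact: row_sub.
    have U0 : Q *m z^T = 0.
      apply: (keyU hP zP); first by rewrite mulmxA (eqP hPQ) mul0mx.
      exact: one1.
    have zQ := trQ hQ U0.
    by move: hQ0; rewrite (keyU hP zP (eqP hPQ) zQ) eqxx.
  have [Ly [RLy [_ yLy]]] := hcov y (conj yi0 (hz y yP)).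
  have [j wj] := notin Ly RLy.
  set w := row j P in wj.
  have wn0 : w != 0 by apply: contra wj => /eqP ->; exact: sub0mx.
  have [Lw [RLw [_ wLw]]] := hcov w (conj wn0 (hz w (row_sub j P))).
  exact: (twolines hR hP RLy RLw (allin _ RLy) (allin _ RLw) wn0 wLw wj).
have [i' yi] := nz_row hPQ.
rewrite row_mul in yi.
set y1 := row i' P in yi.
have y1P : (y1 <= P)%MS by exact: row_sub.
have y1n0 : y1 != 0 by apply: contra yi => /eqP ->; rewrite mul0mx.
have [Ly [RLy [_ yLy]]] := hcov y1 (conj y1n0 (hz y1 y1P)).
have LyP := stepa y1 Ly y1P yi RLy yLy.
have [j wj] := notin Ly RLy.
set w := row j P in wj.
have wP : (w <= P)%MS by exact: row_sub.
have [y' [y'P y'Q y'L]] : exists y' : 'rV_4, [/\ (y' <= P)%MS, y' *m Q != 0 & ~~ (y' <= Ly)%MS].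
  case: (boolP (w *m Q == 0)) => hw.
    exists (y1 + w); split.
    - exact: addmx_sub.
    - by rewrite mulmxDl (eqP hw) addr0.
    - apply: contra wj => h.
      have -> : w = (y1 + w) - y1 by rewrite (addrC y1 w) addrK.
      exact: subsub.
  by exists w.
have y'n0 : y' != 0 by apply: contra y'Q => /eqP ->; rewrite mul0mx.
have [Ly' [RLy' [_ y'Ly']]] := hcov y' (conj y'n0 (hz y' y'P)).
have Ly'P := stepa y' Ly' y'P y'Q RLy' y'Ly'.
exact: (twolines hR hP RLy RLy' LyP Ly'P y'n0 y'Ly' y'L).
Qed.


Lemma mx11mul (K : fieldType) n (a : 'M[K]_1) (x : 'rV[K]_n) : a *m x = a 0 0 *: x.
Proof. by rewrite {1}[a]mx11_scalar mul_scalar_mx. Qed.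

Lemma dec3 (K : fieldType) (x l m : 'rV[K]_4) (w : 'rV[K]_(1+1+1)) :
  w *m col_mx (col_mx x l) m =
  (lsubmx (lsubmx w)) 0 0 *: x + (rsubmx (lsubmx w)) 0 0 *: l + (rsubmx w) 0 0 *: m.
Proof.
by rewrite -{1}(hsubmxK w) -{1}(hsubmxK (lsubmx w)) !mul_row_col !mx11mul.
Qed.

Lemma G2 (K : fieldType) (Q : 'M[K]_4) R1 R2 L M : (2:K) != 0 -> Q^T = Q -> Q != 0 ->
  ruling Q R1 -> ruling Q R2 -> complementary R1 R2 -> R1 L -> R2 M -> meet L M.
Proof.
move=> h2 hQ hQ0 hR1 hR2 hc RL RM.
have [lq1 cov1 un1] := hR1; have [lq2 cov2 un2] := hR2.
have lL := (lq1 L RL).1; have lM := (lq2 M RM).1.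
case: (boolP (\det (col_mx L M : 'M_4) == 0)) => hd.
  by apply/(meet_det lL lM); apply/eqP.
exfalso.
set A : 'M_4 := col_mx L M.
have uA : A \in unitmx by rewrite unitmxE unitfE.
have skew : forall u : 'rV_4, (u <= L)%MS -> (u <= M)%MS -> u = 0.
  move=> u uL uM; apply/eqP; apply: contraT => un0.
  have : meet L M by exists u.
  by move/(meet_det lL lM)/eqP; rewrite (negbTE hd).
pose cf (v : 'rV[K]_4) : 'rV[K]_(2+2) := v *m invmx A.
pose lp v := lsubmx (cf v) *m L.
pose mp v := rsubmx (cf v) *m M.
have dec : forall v, v = lp v + mp v.
  move=> v; rewrite /lp /mp -mul_row_col hsubmxK /cf.
  by rewrite mulmxKV.
have Ln0 : L != 0 by rewrite -mxrank_eq0 lL.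
have [i xi] := nz_row Ln0.
set x := row i L in xi.
have xL : (x <= L)%MS by exact: row_sub.
have hzL := (lq1 L RL).2.
have qx : qb Q x x = 0 by exact: hzL.
have [M' [RM' [_ xM']]] := cov2 x (conj xi qx).
have hlM' := lq2 M' RM'.
have hzM := (lq2 M RM).2.
have [k mk] : exists k, mp (row k M') != 0.
  case: (pickP (fun k => mp (row k M') != 0)) => [k hk|hnone]; first by exists k.
  exfalso.
  have sM'L : (M' <= L)%MS.
    apply/row_subP => k; rewrite (dec (row k M')).
    move: (hnone k) => /= /negbFE /eqP ->; rewrite addr0; exact: submxMl.
  have sLM' : (L <= M')%MS.
    by move: (mxrank_leqif_sup sM'L) => [_ <-]; rewrite hlM'.1 lL.
  by apply: (hc L M' RL RM'); rewrite /same_line; apply/andP; split.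
set v := row k M' in mk.
set m := mp v in mk.
set l := lp v.
have vM' : (v <= M')%MS by exact: row_sub.
have mM : (m <= M)%MS by exact: submxMl.
have lL' : (l <= L)%MS by exact: submxMl.
have ve : v = l + m by exact: dec.
have qxl : qb Q x l = 0 by apply: (polar hQ h2 hzL).
have qxv : qb Q x v = 0 by apply: (polar hQ h2 hlM'.2).
have qll : qb Q l l = 0 by exact: hzL.
have qmm : qb Q m m = 0 by exact: hzM.
have qvv : qb Q v v = 0 by exact: hlM'.2.
have qxm : qb Q x m = 0 by move: qxv; rewrite ve qbDr // qxl add0r.
have qlm : qb Q l m = 0.
  move: qvv; rewrite ve qbDl !qbDr // qll qmm (qbC m l hQ) add0r addr0.
  exact: double0.
case: (boolP (l <= x)%MS) => hlx.
  have mM' : (m <= M')%MS.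
    have -> : m = v - l by rewrite ve (addrC l m) addrK.
    by apply: subsub vM' (submx_trans hlx xM').
  have hmt : meet M' M by exists m.
  have /andP [sM'M _] := G1 hR2 RM' RM hmt.
  by move: xi; rewrite (skew x xL (submx_trans xM' sM'M)) eqxx.
set P := col_mx (col_mx x l) m.
have inj3 : forall w : 'rV_(1+1+1), w *m P = 0 -> w = 0.
  move=> w; rewrite /P dec3.
  set al := (lsubmx (lsubmx w)) 0 0; set be := (rsubmx (lsubmx w)) 0 0; set ga := (rsubmx w) 0 0.
  move=> hw.
  have gm0 : ga *: m = 0.
    apply: skew; last exact: scalemx_sub.
    have -> : ga *: m = 0 - (al *: x + be *: l) by rewrite -hw addrAC subrr add0r.
    apply: subsub; first exact: sub0mx.
    by apply: addmx_sub; apply: scalemx_sub.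
  have ga0 : ga = 0.
    by move/eqP: gm0; rewrite scalemx_eq0 (negbTE mk) orbF => /eqP.
  rewrite gm0 addr0 in hw.
  have be0 : be = 0.
    apply/eqP; apply: contraT => ben0.
    rewrite -(negbTE hlx).
    have -> : l = (- (be^-1 * al)) *: x.
      have hb : be *: l = - (al *: x) by apply/eqP; rewrite -addr_eq0 addrC hw.
      by rewrite -[LHS](scalerK ben0) hb scalerN scalerA scaleNr.
    exact: scalemx_sub (submx_refl x).
  rewrite be0 scale0r addr0 in hw.
  have al0 : al = 0.
    by move/eqP: hw; rewrite scalemx_eq0 (negbTE xi) orbF => /eqP.
  rewrite -(hsubmxK w) -(hsubmxK (lsubmx w)).
  have z1 : forall c : 'M[K]_1, c 0 0 = 0 -> c = 0.
    by move=> c hc0; apply/matrixP => a b; rewrite !ord1 hc0 mxE.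
  by rewrite (z1 _ al0) (z1 _ be0) (z1 _ ga0) !row_mx0.
have rP : \rank P = 3.
  apply/eqP; rewrite -[3%N]/(1+1+1)%N; change (row_free P).
  rewrite -kermx_eq0; apply/eqP/row_matrixP => r; rewrite row0; apply: inj3.
  by rewrite -row_mul mulmx_ker row0.
apply: (noplane h2 hQ hQ0 hR1 rP) => z /submxP [w ->].
rewrite dec3.
set al := (lsubmx (lsubmx w)) 0 0; set be := (rsubmx (lsubmx w)) 0 0; set ga := (rsubmx w) 0 0.
rewrite !qbDl !qbDr // !qbZl !qbZr // qx qxl qxm qll qlm qmm (qbC l x hQ) qxl (qbC m x hQ) qxm (qbC m l hQ) qlm.
by rewrite !mulr0 !addr0.
Qed.


Lemma main_gen (K : fieldType) (Q : 'M[K]_4) R1 R2 (a b : K) : (2:K) != 0 -> Q^T = Q -> Q != 0 ->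
  ruling Q R1 -> ruling Q R2 -> complementary R1 R2 ->
  three_lines_of R1 a -> at_most_two_lines_of R2 b.
Proof.
move=> h2 hQ hQ0 hR1 hR2 hc
  [L1 [L2 [L3 [[RL1 [lL1 cL1]] [RL2 [lL2 cL2]] [RL3 [lL3 cL3]] [n12 n13 n23]]]]].
move=> M1 M2 M3 RM1 [lM1 cM1] RM2 [lM2 cM2] RM3 [lM3 cM3].
case E12 : (M1 == M2)%MS; first by constructor 1; rewrite /same_line E12.
case E13 : (M1 == M3)%MS; first by constructor 2; rewrite /same_line E13.
case E23 : (M2 == M3)%MS; first by constructor 3; rewrite /same_line E23.
exfalso.
have ne : forall R (L L' : 'M[K]_(2,4)), ruling Q R -> R L -> R L' -> is_line L -> is_line L' ->
    ~ same_line L L' -> kf (plucker L) (plucker L') != 0.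
  move=> R L L' hR RL RL' lL lL' nLL; rewrite kf_det; apply/eqP => hd.
  by apply: nLL; apply: (G1 hR RL RL'); apply/(meet_det lL lL').
have z : forall L M, R1 L -> R2 M -> is_line L -> is_line M -> kf (plucker L) (plucker M) = 0.
  move=> L M RL RM lL lM; rewrite kf_det; apply/(meet_det lL lM).
  exact: (G2 h2 hQ hQ0 hR1 hR2 hc RL RM).
apply: (linA (p1 := plucker L1) (p2 := plucker L2) (p3 := plucker L3)
             (q1 := plucker M1) (q2 := plucker M2) (q3 := plucker M3)
             (n := Nvp a) (n' := Nvp b) h2); rewrite ?kf_klein //.
- exact: (ne _ _ _ hR1).
- exact: (ne _ _ _ hR1).
- exact: (ne _ _ _ hR1).
- by apply: (ne _ _ _ hR2) => //; rewrite /same_line E12.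
- by apply: (ne _ _ _ hR2) => //; rewrite /same_line E13.
- by apply: (ne _ _ _ hR2) => //; rewrite /same_line E23.
- move=> p q; rewrite !inE => /or3P [] /eqP -> /or3P [] /eqP ->; exact: z.
- by rewrite -dot6_kf.
- by rewrite -dot6_kf.
- by rewrite -dot6_kf.
- by rewrite kfC -dot6_kf.
- by rewrite kfC -dot6_kf.
- by rewrite kfC -dot6_kf.
- by rewrite kf_NN oppr_eq0.
Qed.

Unset Implicit Arguments.

Theorem mainTheorem6 (F : fieldType) (Fbar : closedFieldType)
  (f : {rmorphism F -> Fbar}) (hchar : 2%N \notin [pchar F])
  (r1 r2 : F) (Q : 'M[Fbar]_4) (hS : doubly_ruled Q)
  (R1 R2 : 'M[Fbar]_(2,4) -> Prop)
  (hR1 : ruling Q R1) (hR2 : ruling Q R2) (hcomp : complementary R1 R2) :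
  (three_lines_of R1 (f r1) -> at_most_two_lines_of R2 (f r2)) /\
  (three_lines_of R1 (f r2) -> at_most_two_lines_of R2 (f r1)).
Proof.
have [[hQ hQ0] _] := hS.
have h2F : (2 : F) != 0.
  apply: contra hchar => h; by rewrite inE /=.
have h2 : (2 : Fbar) != 0 by rewrite -(rmorph_nat f 2) fmorph_eq0.
by split; apply: (main_gen h2 hQ hQ0 hR1 hR2 hcomp).
Qed.
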